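(* Let $A,B\in\mathbb{R}^{m\times n}$ with $m<n$ and $b\in\mathbb{R}^m$, and let $1\le p\le\infty$. Let $B = M_B - N_B$ with $\operatorname{rank}(M_B) =m$. If $M_B^\dagger b\leq0$, $M_B^\dagger (N_B + A) \geq 0$ and $\|M_B^\dagger (N_B + A)\|_p <1$, then the equation $Ax-B|x|=b$ has at least one nonnegative solution.
   Context: $M^\dagger$ is the Moore–Penrose inverse; $|x|$ is the entrywise absolute value; vector/matrix inequalities are entrywise; $\|\cdot\|_p$ on matrices is the operator norm induced by the vector $p$-norm. *)

(* Defs.v *)
From HB Require Import structures.
From mathcomp Require Import all_boot all_order all_algebra.
From mathcomp Require Import all_classical all_reals exp.
Set Implicit Arguments. Unset Strict Implicit. Unset Printing Implicit Defensive.
Import Order.TTheory GRing.Theory Num.Theory.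
Local Open Scope ring_scope.

Definition is_MP_inverse (R : realType) (m n : nat)
  (M : 'M[R]_(m, n)) (X : 'M[R]_(n, m)) : Prop :=
  [/\ M *m X *m M = M, X *m M *m X = X,
      (M *m X)^T = M *m X & (X *m M)^T = X *m M].

Definition vnorm (R : realType) (n : nat) (p : \bar R) (x : 'cV[R]_n) : R :=
  match p with
  | EFin q => (\sum_(i < n) `|x i 0| `^ q) `^ q^-1
  | +oo%E => \big[Num.max/0]_(i < n) `|x i 0|
  | -oo%E => 0
  end.

Definition opnorm (R : realType) (k n : nat) (p : \bar R) (C : 'M[R]_(k, n)) : R :=
  sup [set r : R | exists2 x : 'cV[R]_n, x != 0 & r = vnorm p (C *m x) / vnorm p x].

Definition mx_ge0 (R : realType) (k l : nat) (C : 'M[R]_(k, l)) : Prop :=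
  forall i j, 0 <= C i j.
Definition mx_le0 (R : realType) (k l : nat) (C : 'M[R]_(k, l)) : Prop :=
  forall i j, C i j <= 0.
Definition mx_abs (R : realType) (k l : nat) (C : 'M[R]_(k, l)) : 'M[R]_(k, l) :=
  map_mx (fun a => `|a|) C.

(* Main.v *)
Require Import Defs.
From HB Require Import structures.
From mathcomp Require Import all_boot all_order all_algebra.
From mathcomp Require Import all_classical all_reals exp.
From mathcomp Require Import lra.
Import Order.TTheory GRing.Theory Num.Theory.
Local Open Scope ring_scope.

Section VN.
Variables (R : realType) (n : nat) (p : \bar R).
Hypothesis hp : (1%:E <= p)%E.

Lemma vnorm_ge0 (x : 'cV[R]_n) : 0 <= vnorm p x.
Proof.
case: p hp => [q||] //= _; first exact: powR_ge0.
by apply: (big_ind (fun y => 0 <= y)) => // a c ha hc; rewrite le_max ha.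
Qed.

Lemma vnorm_ge_entry (x : 'cV[R]_n) i : `|x i 0| <= vnorm p x.
Proof.
case: p hp => [q||] //=; last by move=> _; exact: le_bigmax.
rewrite lee_fin => hq.
have q0 : q != 0 by apply: lt0r_neq0; exact: lt_le_trans hq.
have -> : `|x i 0| = (`|x i 0| `^ q) `^ q^-1.
  by rewrite -powRrM mulfV // powRr1.
apply: ge0_ler_powR; rewrite ?invr_ge0 ?(le_trans ler01 hq) ?nnegrE ?powR_ge0 //.
  by apply: sumr_ge0 => j _; exact: powR_ge0.
rewrite (bigD1 i) //= lerDl; apply: sumr_ge0 => j _; exact: powR_ge0.
Qed.

Lemma vnorm_mono (x y : 'cV[R]_n) :
  (forall i, `|x i 0| <= `|y i 0|) -> vnorm p x <= vnorm p y.
Proof.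
move=> hxy.
case: p hp => [q||] //=; last by move=> _; apply: le_bigmax2 => i _; exact: hxy.
rewrite lee_fin => hq.
apply: ge0_ler_powR; rewrite ?invr_ge0 ?(le_trans ler01 hq) ?nnegrE //.
- by apply: sumr_ge0 => j _; exact: powR_ge0.
- by apply: sumr_ge0 => j _; exact: powR_ge0.
apply: ler_sum => j _; apply: ge0_ler_powR; rewrite ?nnegrE //.
exact: (le_trans ler01 hq).
Qed.

Lemma vnorm_bound : exists K : R, 0 <= K /\ forall (x : 'cV[R]_n) c,
  0 <= c -> (forall i, `|x i 0| <= c) -> vnorm p x <= K * c.
Proof.
case: p hp => [q||] //=; last first.
  move=> _; exists 1; split => // x c c0 hx; rewrite mul1r.
  by apply: bigmax_le.
rewrite lee_fin => hq.
have q0 : 0 <= q by exact: (le_trans ler01 hq).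
exists (n%:R `^ q^-1); split; first exact: powR_ge0.
move=> x c c0 hx.
apply: (@le_trans _ _ ((n%:R * c `^ q) `^ q^-1)).
  apply: ge0_ler_powR; rewrite ?invr_ge0 // ?nnegrE.
  - by apply: sumr_ge0 => j _; exact: powR_ge0.
  - by rewrite mulr_ge0 ?powR_ge0.
  apply: (@le_trans _ _ (\sum_(j < n) c `^ q)).
    apply: ler_sum => j _; apply: ge0_ler_powR; rewrite ?nnegrE //.
  by rewrite sumr_const card_ord mulr_natl.
have q1 : q != 0 by apply: lt0r_neq0; exact: lt_le_trans hq.
rewrite powRM ?powR_ge0 // -powRrM mulfV // powRr1 //.
Qed.
End VN.
Lemma zhelp (V : zmodType) (a b c : V) : a - (c + a - b - c) = b.
Proof. rewrite addrAC (addrC c) addrK opprB addrC subrK //. Qed.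

Lemma opnorm_ge (R : realType) (n : nat) (p : \bar R) (hp : (1%:E <= p)%E)
  (C : 'M[R]_(n, n)) (x : 'cV[R]_n) :
  x != 0 -> vnorm p (C *m x) / vnorm p x <= opnorm p C.
Proof.
move=> x0.
have [K [K0 HK]] := (@vnorm_bound R n p hp).
set c := \sum_(i < n) \sum_(j < n) `|C i j|.
have c0 : 0 <= c by apply: sumr_ge0 => i _; apply: sumr_ge0.
have vpos : forall y : 'cV[R]_n, y != 0 -> 0 < vnorm p y.
  move=> y; apply: contraNT; rewrite -leNgt => hy.
  apply/eqP/matrixP => i j; rewrite ord1 mxE; apply/normr0_eq0/eqP.
  by rewrite eq_le normr_ge0 andbT (le_trans (@vnorm_ge_entry R n p hp y i)).
have bd : forall y : 'cV[R]_n, y != 0 -> vnorm p (C *m y) / vnorm p y <= K * c.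
  move=> y y0; have vy := vpos y y0.
  rewrite ler_pdivrMr // -mulrA; apply: HK; first exact: mulr_ge0 c0 (ltW vy).
  move=> i; rewrite mxE.
  apply: (le_trans (ler_norm_sum _ _ _)).
  apply: (@le_trans _ _ (\sum_(j < n) `|C i j| * vnorm p y)).
    apply: ler_sum => j _; rewrite normrM ler_wpM2l //; exact: vnorm_ge_entry.
  rewrite -mulr_suml; apply: ler_wpM2r; first exact: ltW vy.
  rewrite /c [X in _ <= X](bigD1 i) //= lerDl; apply: sumr_ge0 => k _; exact: sumr_ge0.
apply: ub_le_sup.
  exists (K * c) => r [y y0 ->]; exact: bd.
by exists x.
Qed.

Theorem corollary3p4 (R : realType) (m n : nat)
  (A B MB NB : 'M[R]_(m, n)) (b : 'cV[R]_m) (p : \bar R)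
  (MBp : 'M[R]_(n, m)) :
  (m < n)%N ->
  (1%:E <= p)%E ->
  B = MB - NB ->
  \rank MB = m ->
  is_MP_inverse MB MBp ->
  mx_le0 (MBp *m b) ->
  mx_ge0 (MBp *m (NB + A)) ->
  opnorm p (MBp *m (NB + A)) < 1 ->
  exists x : 'cV[R]_n, mx_ge0 x /\ A *m x - B *m mx_abs x = b.
Proof.
move=> _ hp -> hrk [hMP _ _ _] hd hC hn.
set C := MBp *m (NB + A) in hC hn.
set d := MBp *m b in hd.
have vpos : forall y : 'cV[R]_n, y != 0 -> 0 < vnorm p y.
  move=> y; apply: contraNT; rewrite -leNgt => hy.
  apply/eqP/matrixP => i j; rewrite ord1 mxE; apply/normr0_eq0/eqP.
  by rewrite eq_le normr_ge0 andbT (le_trans (@vnorm_ge_entry R n p hp y i)).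
have hU : (1%:M - C) \in unitmx.
  rewrite unitmxE unitfE -det_tr; apply/negP => /det0P [v v0 hv].
  have hy : (1%:M - C) *m v^T = 0.
    by apply: trmx_inj; rewrite trmx_mul trmxK hv trmx0.
  have y0 : v^T != 0.
    by apply/eqP => h; move/eqP: v0; apply; rewrite -(trmxK v) h trmx0.
  have hCy : C *m v^T = v^T.
    by move/eqP: hy; rewrite mulmxBl mul1mx subr_eq0 => /eqP <-.
  have := @opnorm_ge R n p hp C _ y0; rewrite hCy mulfV ?lt0r_neq0 ?vpos //.
  by move=> h; move: (le_lt_trans h hn); rewrite ltxx.
have [x hx0] : exists x : 'cV[R]_n, (1%:M - C) *m x = - d.
  by exists (invmx (1%:M - C) *m (- d)); rewrite mulKVmx.
have hx : x = C *m x - d.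
  move: hx0.
  rewrite mulmxBl mul1mx => h.
  by rewrite -{1}(subrK (C *m x) x) h addrC.
have xge0 : mx_ge0 x.
  set z := map_mx (fun a => if a < 0 then - a else 0) x.
  have z0 : forall i, 0 <= z i 0.
    move=> i; rewrite mxE; case: ifP => // /ltW; by rewrite oppr_ge0.
  have zC : forall i, z i 0 <= (C *m z) i 0.
    move=> i.
    have Cz0 : 0 <= (C *m z) i 0.
      by rewrite mxE; apply: sumr_ge0 => j _; rewrite mulr_ge0.
    have Cxz : 0 <= (C *m x) i 0 + (C *m z) i 0.
      rewrite !mxE -big_split /=; apply: sumr_ge0 => j _.
      rewrite -mulrDr; apply: mulr_ge0 => //; rewrite mxE.
      case: ifP => h; first by rewrite subrr.
      by rewrite addr0 leNgt h.
    rewrite [z i 0]mxE; case: ifP => // hneg.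
    have hxi : x i 0 = (C *m x) i 0 - d i 0 by rewrite {1}hx !mxE.
    have hdi := hd i 0.
    rewrite hxi; lra.
  case: (boolP (z == 0)) => [/eqP zz | znz].
    move=> i j; rewrite ord1; have := z0 i; have : z i 0 = 0 by rewrite zz mxE.
    rewrite mxE; case: ifP => [_ /eqP|hneg _ _]; first by rewrite oppr_eq0 => /eqP ->.
    by rewrite leNgt hneg.
  exfalso.
  have hm : vnorm p z <= vnorm p (C *m z).
    apply: (@vnorm_mono R n p hp) => i; rewrite !ger0_norm //; last exact: le_trans (z0 i) (zC i).
  have := @opnorm_ge R n p hp C _ znz.
  have vz := vpos z znz.
  move=> h; have : 1 <= opnorm p C by apply: le_trans h; rewrite ler_pdivlMr // mul1r.
  by rewrite leNgt hn.
exists x; split => //.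
have habs : mx_abs x = x.
  by apply/matrixP => i j; rewrite mxE ger0_norm.
rewrite habs.
have hrow : row_free MB by rewrite /row_free hrk.
have hMM : MB *m MBp = 1%:M.
  apply: (row_free_inj hrow); by rewrite mul1mx.
have hMx : MB *m x = (NB + A) *m x - b.
  by rewrite {1}hx mulmxBr /C /d !mulmxA hMM !mul1mx.
rewrite mulmxBl hMx mulmxDl.
exact: zhelp.
Qed.
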